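(* Let $d\ge1$, $n\ge2$ be integers, $\kappa_d$ the volume of the $d$-dimensional unit ball, $V\ge0$, $c\in(0,\infty)$, $-d/2<\tau_1<\dots<\tau_n$ reals, $a_i=\tau_i+d$, $x_i=\tau_i+d/2$. Let $\Sigma_n^{\mathrm{sb}}$ have entries $\frac{Vd\kappa_d}{2(x_i+x_j)}$, $\Sigma_n^{\mathrm{sp}}$ entries $\frac{Vd^2\kappa_d^2}{a_ia_j}$, and $\Sigma_n^{\mathrm{cr}}=\Sigma_n^{\mathrm{sb}}+c\Sigma_n^{\mathrm{sp}}$ if $c\le1$, $\Sigma_n^{\mathrm{cr}}=\frac1c\Sigma_n^{\mathrm{sb}}+\Sigma_n^{\mathrm{sp}}$ if $c>1$, with eigenvalues $\lambda_1^{\mathrm{cr}}\le\dots\le\lambda_n^{\mathrm{cr}}$. Put $Q=\sum_{l,k=1}^n\frac{n}{(x_k+x_l)^2}-\big(\sum_{i=1}^n\frac1{2x_i}\big)^2$, $$\bar S_n=\frac{Vd\kappa_d\big(\sum_{i=1}^n\frac1{2x_i}+\sqrt{(n-1)Q}\big)}{2n},\qquad \underline S_n=\frac{Vd\kappa_d\prod_{1\le i<j\le n}(x_i-x_j)^2}{2\prod_{1\le i,j\le n}(x_i+x_j)\Big(\frac{\sum_{i=1}^n\frac{\sqrt{n-1}}{2x_i}+\sqrt Q}{n\sqrt{n-1}}\Big)^{n-1}}.$$ Then $\underline U_n\le\lambda_1^{\mathrm{cr}}\le\dots\le\lambda_n^{\mathrm{cr}}\le\bar U_n$, where (i) for $c\in(0,1]$: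 $\underline U_n=\underline S_n$ and $\bar U_n=\bar S_n+\sum_{i=1}^n\frac{cVd^2\kappa_d^2}{a_i^2}$; (ii) for $c\in(1,\infty)$: $\underline U_n=\underline S_n/c$ and $\bar U_n=\bar S_n/c+\sum_{i=1}^n\frac{Vd^2\kappa_d^2}{a_i^2}$.
   Context: $\Sigma_n^{\mathrm{cr}}$ is the asymptotic covariance matrix of normalized length power functionals in the critical regime $t\delta_t^d\to c$. *)

(* Defs.v *)
From mathcomp Require Import all_boot all_order all_algebra.
From mathcomp Require Import all_classical all_reals all_analysis.
Import Order.TTheory GRing.Theory Num.Theory.
Local Open Scope ring_scope.

(* Volume of the d-dimensional unit ball, via the standard recursion
   kappa_0 = 1, kappa_1 = 2, kappa_(d+2) = 2 pi / (d+2) * kappa_d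
   (equivalently pi^(d/2) / Gamma(d/2 + 1)). *)
Fixpoint ball_vol_aux (R : realType) (d : nat) : R * R :=
  (* returns (kappa_d, kappa_(d+1)) *)
  match d with
  | 0%N => (1, 2)
  | d'.+1 => let p := ball_vol_aux R d' in
             (p.2, (2 * pi / (d'.+2)%:R) * p.1)
  end.
Definition ball_vol (R : realType) (d : nat) : R := (ball_vol_aux R d).1.

Definition Sigma_sb (R : realType) (n d : nat) (V : R) (tau : 'I_n -> R)
  : 'M[R]_n :=
  \matrix_(i, j) (V * d%:R * ball_vol R d /
                  (2 * ((tau i + d%:R / 2) + (tau j + d%:R / 2)))).

Definition Sigma_sp (R : realType) (n d : nat) (V : R) (tau : 'I_n -> R)
  : 'M[R]_n :=
  \matrix_(i, j) (V * (d%:R) ^+ 2 * ball_vol R d ^+ 2 /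
                  ((tau i + d%:R) * (tau j + d%:R))).

Definition Sigma_cr (R : realType) (n d : nat) (V c : R) (tau : 'I_n -> R)
  : 'M[R]_n :=
  if c <= 1 then Sigma_sb R n d V tau + c *: Sigma_sp R n d V tau
  else c^-1 *: Sigma_sb R n d V tau + Sigma_sp R n d V tau.

Definition xx (R : realType) (n d : nat) (tau : 'I_n -> R) (i : 'I_n) : R :=
  tau i + d%:R / 2.

Definition Qn (R : realType) (n d : nat) (tau : 'I_n -> R) : R :=
  (\sum_(l < n) \sum_(k < n) n%:R / (xx R n d tau k + xx R n d tau l) ^+ 2)
  - (\sum_(i < n) (2 * xx R n d tau i)^-1) ^+ 2.

Definition S_upper (R : realType) (n d : nat) (V : R) (tau : 'I_n -> R) : R :=
  V * d%:R * ball_vol R d *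
  ((\sum_(i < n) (2 * xx R n d tau i)^-1) + Num.sqrt ((n%:R - 1) * Qn R n d tau))
  / (2 * n%:R).

Definition S_lower (R : realType) (n d : nat) (V : R) (tau : 'I_n -> R) : R :=
  V * d%:R * ball_vol R d *
  (\prod_(i < n) \prod_(j < n | (i < j)%N) (xx R n d tau i - xx R n d tau j) ^+ 2)
  / (2 * (\prod_(i < n) \prod_(j < n) (xx R n d tau i + xx R n d tau j)) *
     (((\sum_(i < n) Num.sqrt (n%:R - 1) / (2 * xx R n d tau i)) + Num.sqrt (Qn R n d tau))
       / (n%:R * Num.sqrt (n%:R - 1))) ^+ n.-1).

(* Main.v *)
Require Import Defs.
From mathcomp Require Import all_boot all_order all_algebra.
From mathcomp Require Import all_classical all_reals all_analysis.
From mathcomp Require Import complex spectral sesquilinear ring lra.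
Import Order.TTheory GRing.Theory Num.Theory.
Local Open Scope ring_scope.

Section Helpers.
Variable R : realType.
Local Notation C := (R[i]).
Local Notation f := (real_complex R).

Lemma fr_real (x : R) : (f x : C) \is Num.real.
Proof.
by rewrite realE ler0c -oppr_ge0 -rmorphN ler0c oppr_ge0 le_total.
Qed.

Lemma map_tr n (A : 'M[R]_n) : \tr (map_mx f A) = f (\tr A).
Proof. by rewrite /mxtrace rmorph_sum; apply: eq_bigr => i _; rewrite mxE. Qed.

Lemma sym_spectral n (A : 'M[R]_n) : A^T = A ->
  exists D : 'I_n -> R,
   [/\ \tr A = \sum_k D k, \tr (A *m A) = \sum_k D k ^+ 2, \det A = \prod_k D k,
       forall k, \det (A - (D k)%:M) = 0
     & forall v : 'rV[R]_n, exists w : 'I_n -> R,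
        [/\ forall k, 0 <= w k, \sum_k w k = (v *m v^T) 0 0
          & (v *m A *m v^T) 0 0 = \sum_k D k * w k] ].
Proof.
move=> Asym.
pose Ac := map_mx f A.
have Acsym : Ac^T = Ac by rewrite /Ac map_trmx Asym.
have Acreal : Ac \is a realmx by apply/mxOverP => i j; rewrite mxE fr_real.
have Acherm : Ac \is hermsymmx.
  apply: realsym_hermsym => //; apply/is_hermitianmxP.
  by rewrite expr0 scale1r map_mx_id // Acsym.
have /orthomx_spectralP Aeq := hermitian_normalmx Acherm.
set P := spectralmx Ac in Aeq; set sp := spectral_diag Ac in Aeq.
have Pu : P \in unitmx := spectral_unit Ac.
have Punit : P \is unitarymx := spectral_unitarymx Ac.
have spreal : forall k, sp 0 k = f (complex.Re (sp 0 k)).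
  move=> k; have /mxOverP/(_ 0 k) := hermitian_spectral_diag_real Acherm.
  by move/RRe_real => ->.
have PVP : invmx P *m P = 1%:M by rewrite mulVmx.
exists (fun k => complex.Re (sp 0 k)); split.
- apply: complexI; rewrite -map_tr -/Ac Aeq rmorph_sum mxtrace_mulC mulmxA.
  rewrite mulmxV // mul1mx mxtrace_diag; apply: eq_bigr => k _; exact: spreal.
- apply: complexI; rewrite -map_tr map_mxM -/Ac Aeq rmorph_sum.
  rewrite !mulmxA mulmxK // mxtrace_mulC !mulmxA mulmxV // mul1mx mulmx_diag.
  rewrite mxtrace_diag; apply: eq_bigr => k _; rewrite mxE rmorphXn /= -spreal.
  by rewrite expr2.
- apply: complexI; rewrite -det_map_mx -/Ac Aeq rmorph_prod.
  have dP : \det P != 0 by rewrite -unitfE -unitmxE.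
  rewrite !det_mulmx det_inv mulrAC mulVf // mul1r det_diag.
  by apply: eq_bigr => k _; exact: spreal.
- move=> k; apply: complexI; rewrite rmorph0 -det_map_mx map_mxB map_scalar_mx.
  have -> : (f (complex.Re (sp 0 k)))%:M = (sp 0 k)%:M :> 'M[C]_n by rewrite -spreal.
  have -> : Ac - (sp 0 k)%:M = invmx P *m (diag_mx sp - (sp 0 k)%:M) *m P.
    by rewrite mulmxBr mulmxBl -Aeq mul_mx_scalar -scalemxAl PVP scalemx1.
  have dP : \det P != 0 by rewrite -unitfE -unitmxE.
  rewrite !det_mulmx det_inv mulrAC mulVf // mul1r.
  rewrite -diag_const_mx -raddfB /= det_diag (bigD1 k) //= !mxE subrr mul0r.
  by [].
- move=> v.
  pose cT m p (M : 'M[C]_(m, p)) := map_mx Num.conj (M^T).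
  have cTM m p q (M : 'M[C]_(m, p)) (N : 'M[C]_(p, q)) : cT _ _ (M *m N) = cT _ _ N *m cT _ _ M.
    by rewrite /cT trmx_mul map_mxM.
  have cTK m p (M : 'M[C]_(m, p)) : cT _ _ (cT _ _ M) = M.
    by apply/matrixP => i j; rewrite !mxE conjCK.
  have iPE : invmx P = cT _ _ P by rewrite (invmx_unitary Punit).
  pose vc := map_mx f v.
  have vcT : cT _ _ vc = vc^T.
    by apply/matrixP => i j; rewrite !mxE conj_Creal // fr_real.
  pose u := vc *m cT _ _ P.
  have hvv : f ((v *m v^T) 0 0) = (u *m cT _ _ u) 0 0.
    rewrite cTM cTK !mulmxA -(mulmxA vc) -iPE PVP mulmx1 vcT.
    by rewrite /vc map_trmx -map_mxM [RHS]mxE.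
  have hvAv : f ((v *m A *m v^T) 0 0) = (u *m diag_mx sp *m cT _ _ u) 0 0.
    rewrite /u cTM cTK !mulmxA -iPE -(mulmxA vc) -(mulmxA vc) -Aeq vcT.
    rewrite /vc map_trmx -!map_mxM [RHS]mxE. by [].
  pose w k := complex.Re (u 0 k * (u 0 k)^*).
  have hw k : u 0 k * (u 0 k)^* = f (w k).
    by rewrite RRe_real // ger0_real // mul_conjC_ge0.
  have cTe j : cT _ _ u j 0 = (u 0 j)^* by rewrite /cT !mxE.
  exists (fun k => w k); split.
  + by move=> k; rewrite -ler0c -hw mul_conjC_ge0.
  + apply: complexI; rewrite hvv rmorph_sum [RHS]mxE; apply: eq_bigr => k _.
    by rewrite cTe hw.
  + apply: complexI; rewrite hvAv rmorph_sum [LHS]mxE.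
    apply: eq_bigr => k _; rewrite cTe mul_mx_diag mxE rmorphM /= -spreal -hw.
    by rewrite mulrAC mulrC.
Qed.

Lemma cauchy_psd n (x : 'I_n -> R) : (forall i, 0 < x i) ->
  forall v : 'I_n -> R, 0 <= \sum_i \sum_j v i * v j / (x i + x j).
Proof.
elim: n x => [|n IH] x xpos v; first by rewrite big_ord0.
rewrite big_ord_recl big_ord_recl /=.
under [X in _ + X]eq_bigr => i _ do rewrite big_ord_recl.
rewrite big_split /=.
set a := x ord0; set b := v ord0.
set y := fun i => x (lift ord0 i); set u := fun i => v (lift ord0 i).
have a0 : 0 < a by exact: xpos.
have y0 : forall i, 0 < y i by move=> i; exact: xpos.
set S := \sum_i u i / (a + y i).
set z := fun i => u i * (y i - a) / (a + y i).
have IHz := IH y y0 z.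
set W := \sum_i \sum_j z i * z j / (y i + y j) in IHz.
have e1 : \sum_(i < n) b * v (lift ord0 i) / (x ord0 + x (lift ord0 i)) = b * S.
  rewrite /S mulr_sumr; apply: eq_bigr => i _; by rewrite mulrA.
have e2 : \sum_(i < n) v (lift ord0 i) * b / (x (lift ord0 i) + x ord0) = b * S.
  rewrite /S mulr_sumr; apply: eq_bigr => i _.
  rewrite [x (lift ord0 i) + _]addrC /u; ring.
have e3 : \sum_(i < n) \sum_(j < n) v (lift ord0 i) * v (lift ord0 j) /
      (x (lift ord0 i) + x (lift ord0 j)) = 2 * a * S ^+ 2 + W.
  rewrite /W expr2 big_distrlr /= mulr_sumr -big_split /=.
  apply: eq_bigr => i _; rewrite mulr_sumr -big_split /=.
  apply: eq_bigr => j _; rewrite -/(u i) -/(u j) -/(y i) -/(y j) /z.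
  have := y0 i; have := y0 j => yj yi.
  field.
  by rewrite !gt_eqF // ?addr_gt0.
rewrite e1 e2 e3.
have -> : b * b / (x ord0 + x ord0) + b * S + (b * S + (2 * a * S ^+ 2 + W)) =
   (b + 2 * a * S) ^+ 2 / (2 * a) + W.
  rewrite -/a; field; by rewrite !gt_eqF // addr_gt0.
by apply: addr_ge0 => //; rewrite divr_ge0 // ?sqr_ge0 // mulr_ge0 // ltW.
Qed.


Definition cauchy n (x : 'I_n -> R) : 'M[R]_n := \matrix_(i, j) (x i + x j)^-1.
Arguments cauchy {n}.

Lemma prod_lt_recl n (F : 'I_n.+1 -> 'I_n.+1 -> R) :
  \prod_(i < n.+1) \prod_(j < n.+1 | (i < j)%N) F i j =
  (\prod_(j < n) F ord0 (lift ord0 j)) *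
  \prod_(i < n) \prod_(j < n | (i < j)%N) F (lift ord0 i) (lift ord0 j).
Proof.
rewrite big_ord_recl; congr (_ * _).
  by rewrite big_mkcond big_ord_recl /= mul1r; apply: eq_bigr => j _; rewrite ?lift0.
apply: eq_bigr => i _; rewrite big_mkcond big_ord_recl /= ?lift0 mul1r.
by rewrite [RHS]big_mkcond; apply: eq_bigr => j _; rewrite /= ?lift0 ?ltnS.
Qed.

Lemma det_cauchy n (x : 'I_n -> R) : (forall i, 0 < x i) ->
  \det (cauchy x) = (\prod_(i < n) \prod_(j < n | (i < j)%N) (x i - x j) ^+ 2) /
                    \prod_(i < n) \prod_(j < n) (x i + x j).
Proof.
elim: n x => [|n IH] x xpos; first by rewrite det_mx00 !big_ord0 divr1.
set M := cauchy x.
set a := x ord0; set y := fun i => x (lift ord0 i).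
have a0 : 0 < a by exact: xpos.
have y0 : forall i, 0 < y i by move=> i; exact: xpos.
pose E : 'M[R]_n.+1 := \matrix_(i, j) (((j == ord0) && (i != ord0))%:R * (2 * a) * M i ord0).
have EMe : forall i j, (E *m M) i j = (i != ord0)%:R * (2 * a) * M i ord0 * M ord0 j.
  move=> i j; rewrite mxE big_ord_recl big1 ?addr0 => [|k _]; first by rewrite !mxE.
  by rewrite !mxE /= mul0r !mul0r.
have detL : \det (1%:M - E) = 1.
  rewrite det_trig; last first.
    apply/is_trig_mxP => i j ij; rewrite !mxE.
    have -> : (i == j) = false by apply/eqP => eij; rewrite eij ltnn in ij.
    have -> : (j == ord0) = false by apply/negbTE; rewrite -lt0n (leq_ltn_trans _ ij).
    by rewrite /= mul0r !mul0r subrr.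
  by apply: big1 => i _; rewrite !mxE eqxx andbN /= !mul0r subr0.
have LM : \det M = \det (M - E *m M).
  by rewrite -[LHS]mul1r -detL -det_mulmx mulmxBl mul1mx.
rewrite LM (expand_det_col _ ord0) [LHS]big_ord_recl [X in _ + X = _]big1 ?addr0; last first.
  move=> i _; rewrite mxE [X in _ + X]mxE EMe /= !mxE mul1r -/a -/(y i).
  have -> : (y i + a)^-1 - 2 * a / (y i + a) / (a + a) = 0.
    field; by rewrite !gt_eqF // ?addr_gt0.
  by rewrite mul0r.
have Ee : forall i j, (M - E *m M) i j =
    M i j - (i != ord0)%:R * (2 * a) * M i ord0 * M ord0 j.
  by move=> i j; rewrite mxE [X in _ + X]mxE EMe.
pose d := \row_(i < n) ((y i - a) / (y i + a)).
have Se : row' ord0 (col' ord0 (M - E *m M)) = diag_mx d *m cauchy y *m diag_mx d.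
  apply/matrixP => i j; rewrite 2!mxE Ee mul_mx_diag mul_diag_mx !mxE /= mul1r.
  rewrite -/a -/(y i) -/(y j).
  have := y0 i; have := y0 j => yj yi.
  field; by rewrite !gt_eqF // ?addr_gt0.
rewrite Ee /= mul0r !mul0r subr0 /cofactor /= expr0 mul1r Se !det_mulmx !det_diag.
rewrite IH // !mxE prod_lt_recl.
rewrite [\prod_(i < n.+1) \prod_(j < n.+1) _]big_ord_recl big_ord_recl /=.
under [X in _ = _ / (_ * X)]eq_bigr => i _ do rewrite big_ord_recl /=.
rewrite [X in _ = _ / (_ * X)]big_split /=.
under eq_bigr => i _ do rewrite mxE.
rewrite prodf_div -/a.
have -> : \prod_(j < n) (a - x (lift ord0 j)) ^+ 2 = (\prod_(i < n) (y i - a)) ^+ 2.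
  rewrite -prodrXl; apply: eq_bigr => j _; by rewrite -sqrrN opprB.
have -> : \prod_(i < n) (x (lift ord0 i) + a) = \prod_(i < n) (a + y i).
  by apply: eq_bigr => i _; rewrite addrC.
rewrite -/y !invfM; ring.
Qed.


Lemma CS2 (I : finType) (P : pred I) (u w : I -> R) :
  (\sum_(i | P i) u i * w i) ^+ 2 <=
  (\sum_(i | P i) u i ^+ 2) * (\sum_(i | P i) w i ^+ 2).
Proof.
set A := \sum_(i | P i) u i ^+ 2; set B := \sum_(i | P i) u i * w i.
set Cw := \sum_(i | P i) w i ^+ 2.
have H : 0 <= \sum_(i | P i) (B * u i - A * w i) ^+ 2.
  by apply: sumr_ge0 => i _; exact: sqr_ge0.
have E : \sum_(i | P i) (B * u i - A * w i) ^+ 2 = A * (A * Cw - B ^+ 2).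
  transitivity (\sum_(i | P i) (B ^+ 2 * u i ^+ 2 - (2 * A * B) * (u i * w i)
                                + A ^+ 2 * w i ^+ 2)).
    by apply: eq_bigr => i _; ring.
  rewrite big_split sumrB /= -!mulr_sumr -/A -/B -/Cw; ring.
have A0 : 0 <= A by apply: sumr_ge0 => i _; exact: sqr_ge0.
case: (ltgtP A 0) A0 => // [Apos _|Aeq _].
  by move: H; rewrite E pmulr_rge0 // subr_ge0 mulrC.
have u0 : forall i, P i -> u i = 0.
  move=> i Pi; apply/eqP; rewrite -sqrf_eq0; apply/eqP.
  by apply: (psumr_eq0P _ Aeq) => // j _; exact: sqr_ge0.
have -> : B = 0 by rewrite /B big1 // => i Pi; rewrite u0 // mul0r.
by rewrite expr2 mul0r mulr_ge0 // sumr_ge0 // => i _; exact: sqr_ge0.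
Qed.

Lemma CS1 n (k : 'I_n) (g : 'I_n -> R) :
  (\sum_(i | i != k) g i) ^+ 2 <= (n%:R - 1) * \sum_(i | i != k) g i ^+ 2.
Proof.
have := @CS2 'I_n (fun i => i != k) (fun _ => 1) g.
have -> : \sum_(i | i != k) 1 ^+ 2 = n%:R - 1 :> R.
  rewrite expr1n sumr_const cardC1 card_ord.
  have n0 : (0 < n)%N by apply: leq_ltn_trans (ltn_ord k).
  by rewrite -subn1 natrB.
by under eq_bigr do rewrite mul1r.
Qed.


Lemma eig_sq n (D : 'I_n -> R) k :
  (n%:R * D k - \sum_i D i) ^+ 2 <=
  (n%:R - 1) * (n%:R * \sum_i D i ^+ 2 - (\sum_i D i) ^+ 2).
Proof.
rewrite [\sum_i D i](bigD1 k) //= [\sum_i D i ^+ 2](bigD1 k) //=.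
have h := @CS1 n k D.
set s := \sum_(i | i != k) D i in h *; set q := \sum_(i | i != k) D i ^+ 2 in h *.
have h2 : 0 <= n%:R * ((n%:R - 1) * q - s ^+ 2) by rewrite mulr_ge0 // subr_ge0.
set N := n%:R in h2 *.
have -> : (N - 1) * (N * (D k ^+ 2 + q) - (D k + s) ^+ 2) =
   (N * D k - (D k + s)) ^+ 2 + N * ((N - 1) * q - s ^+ 2) by ring.
by rewrite lerDl.
Qed.

Lemma eig_le n (D : 'I_n -> R) k : (2 <= n)%N ->
  (\sum_i D i - Num.sqrt ((n%:R - 1) * (n%:R * \sum_i D i ^+ 2 - (\sum_i D i) ^+ 2))) / n%:R
  <= D k <=
  (\sum_i D i + Num.sqrt ((n%:R - 1) * (n%:R * \sum_i D i ^+ 2 - (\sum_i D i) ^+ 2))) / n%:R.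
Proof.
move=> n2.
set N := n%:R; set T := \sum_i D i; set r := Num.sqrt _.
have hr : `|N * D k - T| <= r by rewrite -sqrtr_sqr ler_wsqrtr // eig_sq.
have N0 : 0 < N by rewrite ltr0n; apply: leq_trans n2.
move: hr; rewrite ler_norml => /andP[h1 h2].
rewrite !ler_pdivrMr // !ler_pdivlMr //.
apply/andP; split; rewrite mulrC; lra.
Qed.

Lemma prod_le n (D : 'I_n -> R) j : (2 <= n)%N -> (forall i, 0 <= D i) ->
  \prod_i D i <= D j * ((\sum_i D i - D j) / (n%:R - 1)) ^+ n.-1.
Proof.
move=> n2 D0.
rewrite [\sum_i D i](bigD1 j) //= [\prod_i D i](bigD1 j) //=.
have -> : D j + \sum_(i | i != j) D i - D j = \sum_(i | i != j) D i by ring.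
apply: ler_wpM2l => //.
have := (leif_AGM (A := predC1 j) (E := D) (fun i _ => D0 i)).1.
rewrite cardC1 card_ord.
have n0 : (0 < n)%N by apply: leq_trans n2.
by rewrite -subn1 natrB // subn1.
Qed.


End Helpers.
Section Final.
Variable R : realType.

Lemma qf_expand n (v : 'rV[R]_n) (M : 'M[R]_n) :
  (v *m M *m v^T) 0 0 = \sum_i \sum_j v 0 i * v 0 j * M i j.
Proof.
rewrite mxE; under eq_bigr => j _ do rewrite !mxE mulr_suml.
rewrite exchange_big; apply: eq_bigr => i _; apply: eq_bigr => j _; ring.
Qed.

Lemma vv_expand n (v : 'rV[R]_n) : (v *m v^T) 0 0 = \sum_i v 0 i ^+ 2.
Proof. by rewrite mxE; apply: eq_bigr => i _; rewrite mxE expr2. Qed.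

Lemma vv_pos n (v : 'rV[R]_n) : v != 0 -> 0 < (v *m v^T) 0 0.
Proof.
move=> v0; rewrite vv_expand lt_def sumr_ge0 ?andbT => [|i _]; last exact: sqr_ge0.
apply: contra v0 => /eqP h; apply/eqP/rowP => i; rewrite mxE.
apply/eqP; rewrite -sqrf_eq0; apply/eqP.
by apply: (psumr_eq0P _ h) => // j _; exact: sqr_ge0.
Qed.

Lemma ball_vol_ge0 d : 0 <= ball_vol R d.
Proof.
suff : 0 <= (ball_vol_aux R d).1 /\ 0 <= (ball_vol_aux R d).2 by case.
elim: d => [|d [h1 h2]] /=; first by split.
split => //; apply: mulr_ge0 => //; apply: divr_ge0 => //.
by apply: mulr_ge0 => //; exact: ltW (pi_gt0 R).
Qed.

Lemma assemble (lam nv qC P g dl L Ub A2 : R) : 0 < nv -> 0 <= g -> 0 <= dl ->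
  lam * nv = g * qC + dl * P -> L * nv <= qC -> qC <= Ub * nv ->
  0 <= P -> P <= A2 * nv -> g * L <= lam /\ lam <= g * Ub + dl * A2.
Proof.
move=> nv0 g0 dl0 e h1 h2 P0 P1; split.
  rewrite -(ler_pM2r nv0) e; apply: ler_wpDr; first exact: mulr_ge0.
  by rewrite -mulrA ler_wpM2l.
rewrite -(ler_pM2r nv0) e mulrDl -!mulrA.
by apply: lerD; rewrite ler_wpM2l.
Qed.

End Final.

Theorem theorem7p6 (R : realType) (d n : nat) (V c : R) (tau : 'I_n -> R) :
  (1 <= d)%N -> (2 <= n)%N -> 0 <= V -> 0 < c ->
  (forall i : 'I_n, - (d%:R / 2) < tau i) ->
  (forall i j : 'I_n, (i < j)%N -> tau i < tau j) ->
  forall lam : R, eigenvalue (Sigma_cr R n d V c tau) lam ->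
    (if c <= 1 then
       S_lower R n d V tau <= lam /\
       lam <= S_upper R n d V tau +
              \sum_(i < n) c * V * (d%:R) ^+ 2 * ball_vol R d ^+ 2
                             / (tau i + d%:R) ^+ 2
     else
       S_lower R n d V tau / c <= lam /\
       lam <= S_upper R n d V tau / c +
              \sum_(i < n) V * (d%:R) ^+ 2 * ball_vol R d ^+ 2
                             / (tau i + d%:R) ^+ 2).
Proof.
move=> hd hn V0 c0 htau hmono lam hlam.
set x := xx R n d tau.
have d0 : (0 : R) <= d%:R by [].
have xpos : forall i, 0 < x i by move=> i; rewrite /x /xx; have := htau i; lra.
have apos : forall i, 0 < tau i + d%:R by move=> i; have := htau i; lra.
have kap0 := ball_vol_ge0 R d.
set N := n%:R : R.
have N1 : 1 < N by rewrite /N ltr1n.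
set Cm := @cauchy R n x.
have Csym : Cm^T = Cm by apply/matrixP => i j; rewrite !mxE addrC.
have [D [hT hS2 hdet heig hray]] := @sym_spectral R n Cm Csym.
have D0 : forall k, 0 <= D k.
  move=> k; have /det0P [u u0 hu] : \det (Cm - (D k)%:M) == 0 by rewrite heig.
  have huC : u *m Cm = D k *: u.
    by apply/eqP; rewrite -subr_eq0 -mul_mx_scalar -mulmxBr hu.
  have := @vv_pos R n u u0; have : 0 <= (u *m Cm *m u^T) 0 0.
    rewrite qf_expand.
    have := @cauchy_psd R n x xpos (fun i => u 0 i).
    by congr (_ <= _); apply: eq_bigr => i _; apply: eq_bigr => j _; rewrite !mxE.
  rewrite huC -scalemxAl mxE => h1 h2.
  by rewrite -(pmulr_lge0 _ h2).
set T := \sum_(i < n) (2 * x i)^-1.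
have hT' : \sum_k D k = T.
  rewrite -hT /mxtrace /T; apply: eq_bigr => i _; rewrite mxE mulr2n mulrDl mul1r.
  by [].
have hQ : N * \sum_k D k ^+ 2 - (\sum_k D k) ^+ 2 = Qn R n d tau.
  rewrite hT' -hS2 /Qn -/x -/T /mxtrace mulr_sumr; congr (_ - _).
  apply: eq_bigr => l _; rewrite mxE mulr_sumr; apply: eq_bigr => k _.
  rewrite !mxE [x k + x l]addrC; have := xpos k; have := xpos l => hl hk.
  field; by rewrite gt_eqF // addr_gt0.
set r := Num.sqrt ((N - 1) * Qn R n d tau).
have hb : forall k, (T - r) / N <= D k <= (T + r) / N.
  by move=> k; move: (eig_le R n D k hn); rewrite -/N hQ hT' -/r.
have Dlb k : (T - r) / N <= D k by case/andP: (hb k).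
have Dub k : D k <= (T + r) / N by case/andP: (hb k).
set Up := (T - (T - r) / N) / (N - 1).
have N10 : 0 < N - 1 by rewrite subr_gt0.
have meanUp j : 0 <= (T - D j) / (N - 1) <= Up.
  apply/andP; split.
    apply: divr_ge0; last exact: ltW.
    rewrite -hT' (bigD1 j) //= addrAC subrr add0r.
    by apply: sumr_ge0 => i _; exact: D0.
  by rewrite /Up ler_pM2r ?invr_gt0 //; have := Dlb j; lra.
have prodle j : \prod_k D k <= D j * Up ^+ n.-1.
  have := prod_le R n D j hn D0; rewrite -/N hT' => /le_trans; apply.
  apply: ler_wpM2l; first exact: D0.
  case/andP: (meanUp j) => m0 m1.
  by apply: lerXn2r => //; rewrite nnegrE //; exact: le_trans m1.
set Lv := \prod_k D k / Up ^+ n.-1.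
have DL k : Lv <= D k.
  have Up0 : 0 <= Up by case/andP: (meanUp k) => m0 m1; exact: le_trans m1.
  have := exprn_ge0 n.-1 Up0; rewrite le_eqVlt => /orP[/eqP e|p].
    by rewrite /Lv -e invr0 mulr0 D0.
  by rewrite /Lv ler_pdivrMr // mulrC prodle.
have ray (v : 'rV[R]_n) : Lv * (v *m v^T) 0 0 <= (v *m Cm *m v^T) 0 0 <=
                          (T + r) / N * (v *m v^T) 0 0.
  have [w [w0 hw1 hw2]] := hray v.
  rewrite -hw1 hw2 !mulr_sumr; apply/andP; split; apply: ler_sum => k _.
    by apply: ler_wpM2r; [exact: w0 | exact: DL].
  by apply: ler_wpM2r; [exact: w0 | exact: Dub].
case/eigenvalueP: hlam => v hv v0.
have qfS : (v *m Sigma_cr R n d V c tau *m v^T) 0 0 = lam * (v *m v^T) 0 0.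
  by rewrite hv -scalemxAl mxE.
set al := V * d%:R * ball_vol R d / 2.
have al0 : 0 <= al by rewrite /al divr_ge0 // !mulr_ge0.
have sbE : Sigma_sb R n d V tau = al *: Cm.
  apply/matrixP => i j; rewrite !mxE /x /xx /al invfM; ring.
set be := V * d%:R ^+ 2 * ball_vol R d ^+ 2.
have be0 : 0 <= be by rewrite /be !mulr_ge0 // exprn_ge0.
set av := \sum_i v 0 i * (tau i + d%:R)^-1.
have spE : (v *m Sigma_sp R n d V tau *m v^T) 0 0 = be * av ^+ 2.
  rewrite qf_expand /av expr2 big_distrlr mulr_sumr; apply: eq_bigr => i _.
  rewrite mulr_sumr; apply: eq_bigr => j _; rewrite mxE invfM /be /=; ring.
set A2 := \sum_i ((tau i + d%:R)^-1) ^+ 2.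
have hP1 : av ^+ 2 <= A2 * (v *m v^T) 0 0.
  have := CS2 R _ xpredT (fun i => v 0 i) (fun i => (tau i + d%:R)^-1).
  by rewrite vv_expand mulrC.
have nvpos := vv_pos R n v v0.
have qfD (A B : 'M[R]_n) : (v *m (A + B) *m v^T) 0 0 =
    (v *m A *m v^T) 0 0 + (v *m B *m v^T) 0 0 by rewrite mulmxDr mulmxDl mxE.
have qfZ s (A : 'M[R]_n) : (v *m (s *: A) *m v^T) 0 0 = s * (v *m A *m v^T) 0 0.
  by rewrite -scalemxAr -scalemxAl mxE.
have UpE : ((\sum_(i < n) Num.sqrt (N - 1) / (2 * x i)) + Num.sqrt (Qn R n d tau))
            / (N * Num.sqrt (N - 1)) = Up.
  set s := Num.sqrt (N - 1); set q := Num.sqrt (Qn R n d tau).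
  have s0 : 0 < s by rewrite sqrtr_gt0.
  have ss : s ^+ 2 = N - 1 by rewrite sqr_sqrtr // ltW.
  have rE : r = s * q by rewrite /r sqrtrM // ltW.
  have sumE : \sum_(i < n) s / (2 * x i) = s * T by rewrite /T mulr_sumr.
  have NE : N = s ^+ 2 + 1 by rewrite ss subrK.
  rewrite sumE /Up rE -ss NE; field.
  by rewrite !gt_eqF // ?addr_gt0 // ?exprn_gt0.
have Slow : S_lower R n d V tau = al * Lv.
  rewrite /S_lower -/x -/N UpE /Lv -hdet det_cauchy // /al !invfM; ring.
have Sup : S_upper R n d V tau = al * ((T + r) / N).
  rewrite /S_upper -/x -/N -/T -/r /al !invfM; ring.
move: qfS; rewrite /Sigma_cr; case: ifP => hc qfS.
  rewrite qfD qfZ sbE qfZ spE mulrA in qfS.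
have ci0 : 0 <= c^-1 by rewrite invr_ge0 ltW.
  have := assemble R lam _ _ _ al (c * be) _ _ _ nvpos al0
    (mulr_ge0 (ltW c0) be0) (esym qfS) (proj1 (andP (ray v))) (proj2 (andP (ray v)))
    (sqr_ge0 _) hP1.
  rewrite Slow Sup.
  have -> : \sum_(i < n) c * V * d%:R ^+ 2 * ball_vol R d ^+ 2 / (tau i + d%:R) ^+ 2
            = c * be * A2.
    by rewrite /A2 mulr_sumr; apply: eq_bigr => i _; rewrite exprVn /be; ring.
  by [].
rewrite qfD qfZ sbE qfZ spE mulrA in qfS.
have ci0 : 0 <= c^-1 by rewrite invr_ge0 ltW.
have := assemble R lam _ _ _ (c^-1 * al) be _ _ _ nvpos
  (mulr_ge0 ci0 al0) be0 (esym qfS) (proj1 (andP (ray v)))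
  (proj2 (andP (ray v))) (sqr_ge0 _) hP1.
rewrite Slow Sup.
have -> : \sum_(i < n) V * d%:R ^+ 2 * ball_vol R d ^+ 2 / (tau i + d%:R) ^+ 2
          = be * A2.
  by rewrite /A2 mulr_sumr; apply: eq_bigr => i _; rewrite exprVn /be; ring.
by rewrite ![_ / c]mulrC !mulrA.
Qed.
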